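(* Consider any $(M,N)$-VLFT code for a $K$-user DM-BC, and fix $j\in\{1,\dots,K\}$ with $P_{Y_j|X}(y|x)>0$ for all $x\in\mathcal X$, $y\in\mathcal Y_j$. Then for every $n\ge0$, every $y\in\mathcal Y_j$ and every realization $y_j^n$ of $Y_j^n$ with $\mathbb P(Y_j^n=y_j^n)>0$ and $\mathcal H(W|Y_j^n=y_j^n)>0$, $$\ln\mathcal H(W|Y_j^n=y_j^n)-\ln\mathcal H(W|Y_j^{n+1}=(y_j^n,y))\le\ln T_j.$$
   Context: A $K$-user discrete memoryless broadcast channel (DM-BC) consists of a finite input alphabet $\mathcal X$, finite output alphabets $\mathcal Y_1,\dots,\mathcal Y_K$ and a transition law $P_{Y_1,\dots,Y_K|X}$; $P_{Y_j|X}$ denotes its $j$-th marginal. Logarithms are natural. An $(M,N)$-VLFT code ($M$ a positive integer, $N>0$ real) consists of: a message $W$ uniform on $\mathcal W=\{1,\dots,M\}$; encoders $f_n:\mathcal W\times\mathcal Y_1^{n-1}\times\cdots\times\mathcal Y_K^{n-1}\to\mathcal X$, $n\ge1$, with $X_n=f_n(W,Y_1^{n-1},\dots,Y_K^{n-1})$, where given $(W,X^n,Y_1^{n-1},\dots,Y_K^{n-1})$ the tuple $(Y_{1,n},\dots,Y_{K,n})$ is distributed as $P_{Y_1,\dots,Y_K|X}(\cdot|X_n)$; decoders $g^{(j)}_n:\mathcal Y_j^n\to\mathcal W$; for each $j$ a stopping time $\tau_j$ of the filtration $\{\sigma(Y_j^n)\}_{n\ge0}$, with $\tau=\max_j\tau_j$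 satisfying $\mathbb E[\tau]\le N$. For a realization $z$ of a random vector $Z$, $\mathcal H(W|Z=z):=-\sum_{w\in\mathcal W}\mathbb P(W=w|Z=z)\ln\mathbb P(W=w|Z=z)$. $T_j=\max_{x,x'\in\mathcal X,\,y\in\mathcal Y_j}\frac{P_{Y_j|X}(y|x)}{P_{Y_j|X}(y|x')}$. *)

(* Defs.v *)
From Stdlib Require Import Reals.
From mathcomp Require Import all_boot.
Set Implicit Arguments. Unset Strict Implicit. Unset Printing Implicit Defensive.
Local Open Scope R_scope.

Definition Rsum (l : seq R) : R := foldr Rplus 0 l.

Definition Zout (K : nat) (Y : 'I_K -> finType) : finType :=
  {dffun forall k : 'I_K, Y k}.

Definition marg K (Y : 'I_K -> finType) (X : finType) (P : X -> Zout Y -> R)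
  (j : 'I_K) (x : X) (y : Y j) : R :=
  Rsum [seq P x z | z : Zout Y <- enum (Zout Y) & z j == y].

Arguments marg [K Y X] P j x y.

Definition is_channel K (Y : 'I_K -> finType) (X : finType) (P : X -> Zout Y -> R) :=
  (forall x z, 0 <= P x z) /\ (forall x, Rsum [seq P x z | z <- enum (Zout Y)] = 1).

(* Encoder: f w s = X_{n} where s = (joint outputs Y_{1..K,1}, ..., Y_{1..K,n-1}),
   i.e. the family (f_n)_n is encoded by the length of the past sequence s.
   pw_aux w past future = P(outputs "future" follow | W = w, past outputs "past"). *)
Fixpoint pw_aux K (Y : 'I_K -> finType) (X : finType) (P : X -> Zout Y -> R)
  (M : nat) (f : 'I_M -> seq (Zout Y) -> X) (w : 'I_M)
  (past future : seq (Zout Y)) : R :=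
  match future with
  | [::] => 1
  | z :: fut => P (f w past) z * pw_aux P f w (rcons past z) fut
  end.

Definition pw K (Y : 'I_K -> finType) (X : finType) (P : X -> Zout Y -> R)
  (M : nat) (f : 'I_M -> seq (Zout Y) -> X) (w : 'I_M) (zs : seq (Zout Y)) : R :=
  pw_aux P f w [::] zs.

Definition allseqs (T : finType) (n : nat) : seq (seq T) :=
  [seq val t | t <- enum {: n.-tuple T}].

(* P(W = w, Y_j^n = ys), n = size ys, W uniform on M messages *)
Definition PWY K (Y : 'I_K -> finType) (X : finType) (P : X -> Zout Y -> R)
  (M : nat) (f : 'I_M -> seq (Zout Y) -> X) (j : 'I_K) (w : 'I_M) (ys : seq (Y j)) : R :=
  / INR M * Rsum [seq pw P f w zs | zs <- allseqs (Zout Y) (size ys)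
                                  & [seq z j | z : Zout Y <- zs] == ys].

Definition PY K (Y : 'I_K -> finType) (X : finType) (P : X -> Zout Y -> R)
  (M : nat) (f : 'I_M -> seq (Zout Y) -> X) (j : 'I_K) (ys : seq (Y j)) : R :=
  Rsum [seq PWY P f w ys | w <- enum 'I_M].

Definition post K (Y : 'I_K -> finType) (X : finType) (P : X -> Zout Y -> R)
  (M : nat) (f : 'I_M -> seq (Zout Y) -> X) (j : 'I_K) (w : 'I_M) (ys : seq (Y j)) : R :=
  PWY P f w ys / PY P f ys.

Definition xlnx (p : R) : R := if Rlt_dec 0 p then p * ln p else 0.

Definition Hcond K (Y : 'I_K -> finType) (X : finType) (P : X -> Zout Y -> R)
  (M : nat) (f : 'I_M -> seq (Zout Y) -> X) (j : 'I_K) (ys : seq (Y j)) : R :=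
  - Rsum [seq xlnx (post P f w ys) | w <- enum 'I_M].

Definition Tj K (Y : 'I_K -> finType) (X : finType) (P : X -> Zout Y -> R) (j : 'I_K) : R :=
  foldr Rmax 0
    (flatten [seq flatten [seq [seq marg P j x y / marg P j x' y | y <- enum (Y j)]
                          | x' <- enum X] | x <- enum X]).

(* Main.v *)
Require Import Defs.
From Stdlib Require Import Reals Lra.
From mathcomp Require Import all_boot all_algebra.
From mathcomp Require Import Rstruct.
Import GRing.Theory Num.Theory.
Section Sums.
Local Open Scope ring_scope.

Lemma Rsum_big (I : Type) (l : seq I) (F : I -> R) :
  Rsum [seq F x | x <- l] = \sum_(x <- l) F x.
Proof. by elim: l => [|a l IH] /=; rewrite ?big_nil ?big_cons ?IH. Qed.

Lemma Rsum_bigf (I : Type) (l : seq I) (p : pred I) (F : I -> R) :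
  Rsum [seq F x | x <- l & p x] = \sum_(x <- l | p x) F x.
Proof. by rewrite Rsum_big big_filter. Qed.

Lemma mem_allseqs (T : finType) n (s : seq T) : (s \in allseqs T n) = (size s == n).
Proof.
apply/mapP/idP.
  by case=> t _ ->; rewrite size_tuple.
by move=> H; exists (Tuple H); rewrite ?mem_enum.
Qed.

Lemma uniq_allseqs (T : finType) n : uniq (allseqs T n).
Proof. by rewrite map_inj_uniq ?enum_uniq //; exact: val_inj. Qed.

Lemma perm_allseqs (T : finType) n :
  perm_eq (allseqs T n.+1) [seq rcons s z | s <- allseqs T n, z <- enum T].
Proof.
apply: uniq_perm; first exact: uniq_allseqs.
  apply: allpairs_uniq; [exact: uniq_allseqs| exact: enum_uniq|].
  by move=> [a b] [c d] _ _ /= /eqP; rewrite eqseq_rcons => /andP[/eqP-> /eqP->].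
move=> u; rewrite mem_allseqs; apply/idP/allpairsP.
  case/lastP: u => [|s z] //; rewrite size_rcons eqSS => H.
  by exists (s, z); rewrite mem_allseqs H mem_enum.
case=> [[s z]] /= [Hs _ ->]; rewrite mem_allseqs in Hs.
by rewrite size_rcons (eqP Hs).
Qed.

End Sums.

Section Chan.
Local Open Scope R_scope.
Variables (K : nat) (X : finType) (Y : 'I_K -> finType)
  (P : X -> Zout Y -> R) (M : nat) (f : 'I_M -> seq (Zout Y) -> X) (j : 'I_K).

Lemma pw_aux_rcons w past fut z :
  pw_aux P f w past (rcons fut z) = pw_aux P f w past fut * P (f w (past ++ fut)) z.
Proof.
elim: fut past => [|a fut IH] past /=.
  by rewrite cats0 Rmult_1_r Rmult_1_l.
by rewrite IH cat_rcons Rmult_assoc.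
Qed.

Lemma pw_rcons w s z : pw P f w (rcons s z) = pw P f w s * P (f w s) z.
Proof. exact: pw_aux_rcons. Qed.

Lemma pw_ge0 w s : is_channel P -> 0 <= pw P f w s.
Proof.
move=> [H0 _]; rewrite /pw; elim/last_ind: s => [|s z IH] /=; first lra.
rewrite pw_aux_rcons; apply: Rmult_le_pos => //.
Qed.

Lemma PWY_rcons w (yn : seq (Y j)) y :
  PWY P f w (rcons yn y) = / INR M *
    Rsum [seq pw P f w zs * marg P j (f w zs) y | zs <- allseqs (Zout Y) (size yn)
                                  & [seq z j | z : Zout Y <- zs] == yn].
Proof.
rewrite /PWY size_rcons; congr (_ * _).
rewrite !Rsum_bigf (perm_big _ (perm_allseqs _ _)) big_mkcond big_allpairs_dep /=.
rewrite [RHS]big_mkcond; apply: eq_bigr => s _.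
under eq_bigr => z _ do rewrite map_rcons eqseq_rcons.
case: eqP => Hs /=.
  rewrite -big_mkcond /= /marg Rsum_bigf; apply: esym; apply: etrans.
    exact: GRing.mulr_sumr.
  by apply: eq_bigr => z _; rewrite pw_rcons.
by rewrite big1.
Qed.

End Chan.

Section Real.
Local Open Scope R_scope.

Lemma Rsum_le (I : Type) (l : seq I) (F G : I -> R) :
  (forall x, F x <= G x) -> Rsum (map F l) <= Rsum (map G l).
Proof. move=> H; elim: l => [|a l IH] /=; [lra| have := H a; lra]. Qed.

Lemma Rsum_lin (I : Type) (l : seq I) (a b : R) (F G : I -> R) :
  Rsum [seq a * F x + b * G x | x <- l] = a * Rsum (map F l) + b * Rsum (map G l).
Proof. elim: l => [|c l IH] /=; [ring| rewrite IH; ring]. Qed.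

Lemma Rsum_scal (I : Type) (l : seq I) (a : R) (F : I -> R) :
  Rsum [seq a * F x | x <- l] = a * Rsum (map F l).
Proof. elim: l => [|c l IH] /=; [ring| rewrite IH; ring]. Qed.

Lemma Rsum_ge0 (I : Type) (l : seq I) (F : I -> R) :
  (forall x, 0 <= F x) -> 0 <= Rsum (map F l).
Proof. move=> H; elim: l => [|a l IH] /=; [lra| have := H a; lra]. Qed.

Lemma Rsum_ge_elem (I : eqType) (l : seq I) (F : I -> R) x :
  (forall x, 0 <= F x) -> x \in l -> F x <= Rsum (map F l).
Proof.
move=> H; elim: l => [|a l IH] //=; rewrite in_cons => /orP[/eqP->|Hx].
  have := @Rsum_ge0 _ l F H; lra.
have := IH Hx; have := H a; lra.
Qed.

Lemma foldr_Rmax_ge (l : seq R) a : a \in l -> a <= foldr Rmax 0 l.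
Proof.
elim: l => [|b l IH] //=; rewrite in_cons => /orP[/eqP->|Ha].
  exact: Rmax_l.
apply: Rle_trans (IH Ha) _; exact: Rmax_r.
Qed.

Lemma exists_min (T : finType) (g : T -> R) (x0 : T) :
  exists x, forall x', g x <= g x'.
Proof.
suff [x Hx] : exists x, forall x', x' \in enum T -> g x <= g x'.
  by exists x => x'; apply: Hx; rewrite mem_enum.
elim: (enum T) => [|a l [x Hx]]; first by exists x0.
case: (Rle_dec (g a) (g x)) => Ha.
  exists a => x'; rewrite in_cons => /orP[/eqP->|Hx']; first lra.
  have := Hx x' Hx'; lra.
exists x => x'; rewrite in_cons => /orP[/eqP->|Hx']; first lra.
exact: Hx.
Qed.

Lemma ln_le_sub1 t : 0 < t -> ln t <= t - 1.
Proof. move=> Ht; have := exp_ineq1_le (ln t); rewrite exp_ln //; lra. Qed.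

Lemma xlnx0 : xlnx 0 = 0.
Proof. by rewrite /xlnx; case: Rlt_dec => // H; lra. Qed.

Lemma xlnx_pos p : 0 < p -> xlnx p = p * ln p.
Proof. by rewrite /xlnx; case: Rlt_dec. Qed.

Lemma xlnx_gap a c : 0 <= a -> 0 < c -> a - c <= xlnx a - a * ln c.
Proof.
move=> Ha Hc; case: (Req_dec a 0) => [->|Ha0].
  rewrite xlnx0; lra.
have Ha' : 0 < a by lra.
rewrite xlnx_pos //.
have H1 := ln_le_sub1 (c / a) (Rdiv_lt_0_compat _ _ Hc Ha').
rewrite /Rdiv ln_mult ?ln_Rinv // in H1; try by apply: Rinv_0_lt_compat.
have H2 : a * (ln c + - ln a) <= a * (c * / a - 1) by apply: Rmult_le_compat_l; lra.
have H3 : a * (c * / a - 1) = c - a by field; lra.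
lra.
Qed.

Lemma xlnx_mix l a q : 0 < l < 1 -> 0 <= a -> 0 <= q ->
  xlnx (l * a + (1 - l) * q) <= l * xlnx a + (1 - l) * xlnx q.
Proof.
move=> Hl Ha Hq.
have Hc0 : 0 <= l * a + (1 - l) * q.
  have := Rmult_le_pos l a ltac:(lra) Ha; have := Rmult_le_pos (1 - l) q ltac:(lra) Hq; lra.
case: (Req_dec (l * a + (1 - l) * q) 0) => Hc.
  have Ha0 : a = 0.
    case: (Req_dec a 0) => // Hn; have : 0 < l * a by apply: Rmult_lt_0_compat; lra.
    have := Rmult_le_pos (1 - l) q ltac:(lra) Hq; lra.
  have Hq0 : q = 0.
    case: (Req_dec q 0) => // Hn; have : 0 < (1 - l) * q by apply: Rmult_lt_0_compat; lra.
    have := Rmult_le_pos l a ltac:(lra) Ha; lra.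
  rewrite Hc Ha0 Hq0 xlnx0; lra.
set c := l * a + (1 - l) * q in Hc Hc0 *.
have Hcp : 0 < c by lra.
have G1 := xlnx_gap a c Ha Hcp; have G2 := xlnx_gap q c Hq Hcp.
have G1' : l * (a - c) <= l * (xlnx a - a * ln c) by apply: Rmult_le_compat_l; lra.
have G2' : (1 - l) * (q - c) <= (1 - l) * (xlnx q - q * ln c) by apply: Rmult_le_compat_l; lra.
rewrite xlnx_pos //.
have E : c * ln c = l * (a * ln c) + (1 - l) * (q * ln c) by rewrite /c; ring.
have E2 : l * (a - c) + (1 - l) * (q - c) = 0 by rewrite /c; ring.
lra.
Qed.

Lemma xlnx_le0 q : 0 <= q <= 1 -> xlnx q <= 0.
Proof.
move=> Hq; case: (Req_dec q 0) => [->|Hn]; first by rewrite xlnx0; lra.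
rewrite xlnx_pos; last lra.
have := ln_le_sub1 q ltac:(lra) => H.
have : q * ln q <= q * 0 by apply: Rmult_le_compat_l; lra.
lra.
Qed.

Lemma xlnx_key l p p' : 0 < l <= 1 -> 0 <= p -> l * p <= p' <= 1 - l + l * p ->
  xlnx p' <= l * xlnx p.
Proof.
move=> Hl Hp Hp'.
case: (Req_dec l 1) => Hl1.
  subst l; have -> : p' = p by lra.
  lra.
set q := (p' - l * p) / (1 - l).
have Hq : 0 <= q <= 1.
  rewrite /q; split.
    apply: Rmult_le_pos; [lra| apply: Rlt_le; apply: Rinv_0_lt_compat; lra].
  have Hi : 0 < / (1 - l) by apply: Rinv_0_lt_compat; lra.
  have : (p' - l * p) * / (1 - l) <= (1 - l) * / (1 - l).
    apply: Rmult_le_compat_r; lra.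
  rewrite Rinv_r; lra.
have -> : p' = l * p + (1 - l) * q by rewrite /q; field; lra.
have := xlnx_mix l p q ltac:(lra) Hp ltac:(lra).
have := xlnx_le0 q Hq.
have : (1 - l) * xlnx q <= 0.
  have := xlnx_le0 q Hq => H.
  have : (1 - l) * xlnx q <= (1 - l) * 0 by apply: Rmult_le_compat_l; lra.
  lra.
lra.
Qed.

End Real.
Local Open Scope R_scope.

Lemma Rsum_div (I : Type) (l : seq I) (F : I -> R) c :
  Rsum [seq F x / c | x <- l] = Rsum (map F l) / c.
Proof. elim: l => [|a l IH] /=; rewrite /Rdiv; [ring| rewrite /Rdiv in IH; rewrite IH; ring]. Qed.

Theorem lemma7 (K : nat) (X : finType) (Y : 'I_K -> finType)
  (P : X -> Zout Y -> R) (M : nat) (f : 'I_M -> seq (Zout Y) -> X) (j : 'I_K) :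
  (0 < M)%N ->
  is_channel P ->
  (forall (x : X) (y : Y j), 0 < marg P j x y) ->
  forall (n : nat) (yn : seq (Y j)) (y : Y j),
    size yn = n ->
    0 < PY P f yn ->
    0 < Hcond P f yn ->
    ln (Hcond P f yn) - ln (Hcond P f (rcons yn y)) <= ln (Tj P j).
Proof.
move=> HM Hch Hpos n yn y Hsize HPY HH.
pose x0 := f (Ordinal HM) [::].
have [xm Hxm] := exists_min _ (fun x => marg P j x y) x0.
set m := marg P j xm y.
have Hm : 0 < m := Hpos xm y.
set T := Tj P j.
have Hratio : forall x x', marg P j x y / marg P j x' y <= T.
  move=> x x'; apply: foldr_Rmax_ge.
  apply/flattenP; exists (flatten [seq [seq marg P j x y0 / marg P j x'0 y0 | y0 <- enum (Y j)] | x'0 <- enum X]).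
    by apply/mapP; exists x; rewrite ?mem_enum.
  apply/flattenP; exists [seq marg P j x y0 / marg P j x' y0 | y0 <- enum (Y j)].
    by apply/mapP; exists x'; rewrite ?mem_enum.
  by apply/mapP; exists y; rewrite ?mem_enum.
have HTm : forall x, marg P j x y <= T * m.
  move=> x; have H := Hratio x xm; have Hx := Hpos x y.
  have Hm0 : m <> 0 by lra.
  have E : marg P j x y = (marg P j x y / m) * m by field.
  rewrite E; apply: Rmult_le_compat_r; [lra| exact: H].
have HT1 : 1 <= T.
  have := Hratio xm xm; rewrite /Rdiv Rinv_r; first lra.
  by apply: Rgt_not_eq; exact: Hm.
set L := [seq zs <- allseqs (Zout Y) (size yn) | [seq z j | z : Zout Y <- zs] == yn].
have HA : forall w, PWY P f w yn = / INR M * Rsum [seq pw P f w zs | zs <- L] by [].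
have HA' : forall w, PWY P f w (rcons yn y) =
    / INR M * Rsum [seq pw P f w zs * marg P j (f w zs) y | zs <- L].
  by move=> w; rewrite PWY_rcons.
have HiM : 0 < / INR M by apply: Rinv_0_lt_compat; apply: lt_0_INR; apply/ltP.
have Hb : forall w, m * PWY P f w yn <= PWY P f w (rcons yn y) <= T * m * PWY P f w yn
                   /\ 0 <= PWY P f w yn.
  move=> w; rewrite HA HA'.
  have H0 : 0 <= Rsum [seq pw P f w zs | zs <- L].
    by apply: Rsum_ge0 => zs; apply: pw_ge0.
  have H1 : m * Rsum [seq pw P f w zs | zs <- L] <=
            Rsum [seq pw P f w zs * marg P j (f w zs) y | zs <- L].
    rewrite -Rsum_scal; apply: Rsum_le => zs; rewrite (Rmult_comm m).
    apply: Rmult_le_compat_l; [exact: pw_ge0| exact: Hxm].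
  have H2 : Rsum [seq pw P f w zs * marg P j (f w zs) y | zs <- L] <=
            (T * m) * Rsum [seq pw P f w zs | zs <- L].
    rewrite -Rsum_scal; apply: Rsum_le => zs; rewrite (Rmult_comm (T * m)).
    apply: Rmult_le_compat_l; [exact: pw_ge0| exact: HTm].
  have H1' := Rmult_le_compat_l _ _ _ (Rlt_le _ _ HiM) H1.
  have H2' := Rmult_le_compat_l _ _ _ (Rlt_le _ _ HiM) H2.
  have H0' := Rmult_le_pos _ _ (Rlt_le _ _ HiM) H0.
  lra.
pose A w := PWY P f w yn.
pose A' w := PWY P f w (rcons yn y).
pose S := PY P f yn.
pose S' := PY P f (rcons yn y).
have HS : S = Rsum [seq A w | w <- enum 'I_M] by [].
have HS' : S' = Rsum [seq A' w | w <- enum 'I_M] by [].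
have HS'b : m * S <= S' <= T * m * S.
  have E1 : m * S = Rsum [seq m * A w | w <- enum 'I_M] by rewrite HS Rsum_scal.
  have E2 : T * m * S = Rsum [seq (T * m) * A w | w <- enum 'I_M] by rewrite HS Rsum_scal.
  rewrite E1 E2 HS'; split; apply: Rsum_le => w.
    exact: (proj1 (proj1 (Hb w))).
  exact: (proj2 (proj1 (Hb w))).
have HSp : 0 < S by [].
have HS'p : 0 < S'.
  have := Rmult_lt_0_compat _ _ Hm HSp; lra.
pose p w := A w / S.
pose p' w := A' w / S'.
have Hp0 : forall w, 0 <= p w.
  move=> w; apply: Rmult_le_pos; [exact: (proj2 (Hb w))| apply: Rlt_le; exact: Rinv_0_lt_compat].
have Hsum : Rsum [seq p w | w <- enum 'I_M] = 1.
  by rewrite Rsum_div -HS /Rdiv Rinv_r //; apply: Rgt_not_eq.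
have Hsum' : Rsum [seq p' w | w <- enum 'I_M] = 1.
  by rewrite Rsum_div -HS' /Rdiv Rinv_r //; apply: Rgt_not_eq.
have HTp : 0 < T by lra.
have Hlow : forall w, / T * p w <= p' w.
  move=> w; have [[H1 H2] H3] := Hb w.
  have E : p' w - / T * p w = (T * A' w * S - A w * S') * / (T * S * S').
    rewrite /p /p' /A /A' /Rdiv; field; split; [lra|split; lra].
  have K1 : A w * S' <= A w * (T * m * S) by apply: Rmult_le_compat_l; rewrite /A; lra.
  have K2 : T * (m * A w) * S <= T * A' w * S.
    apply: Rmult_le_compat_r; [lra|]; apply: Rmult_le_compat_l; rewrite /A /A'; lra.
  have K3 : 0 <= (T * A' w * S - A w * S') * / (T * S * S').
    apply: Rmult_le_pos; [|apply: Rlt_le; apply: Rinv_0_lt_compat].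
      rewrite /A /A' in K1 K2 *; lra.
    apply: Rmult_lt_0_compat; [apply: Rmult_lt_0_compat|]; lra.
  lra.
have Hup : forall w, p' w <= 1 - / T + / T * p w.
  move=> w.
  have Hn : forall v, 0 <= 1 * p' v + (- / T) * p v by move=> v; have := Hlow v; lra.
  have Hw : w \in enum 'I_M by rewrite mem_enum.
  have H := @Rsum_ge_elem _ (enum 'I_M) _ w Hn Hw.
  rewrite Rsum_lin Hsum Hsum' in H; lra.
have HiT : 0 < / T <= 1.
  split; first exact: Rinv_0_lt_compat.
  rewrite -Rinv_1; apply: Rinv_le_contravar; lra.
have Hkey : forall w, xlnx (p' w) <= / T * xlnx (p w).
  move=> w; apply: xlnx_key; [exact: HiT| exact: Hp0| split; [exact: Hlow| exact: Hup]].
have HHc : / T * Hcond P f yn <= Hcond P f (rcons yn y).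
  rewrite /Hcond.
  have := Rsum_le _ (enum 'I_M) _ _ Hkey; rewrite Rsum_scal.
  change (Rsum [seq xlnx (p' w) | w <- enum 'I_M] <= / T * Rsum [seq xlnx (p w) | w <- enum 'I_M] ->
    / T * - Rsum [seq xlnx (p w) | w <- enum 'I_M] <= - Rsum [seq xlnx (p' w) | w <- enum 'I_M]).
  lra.
set H := Hcond P f yn in HH HHc *.
set H' := Hcond P f (rcons yn y) in HHc *.
have H'p : 0 < H' by have := Rmult_lt_0_compat _ _ (proj1 HiT) HH; lra.
have Hle : H <= T * H'.
  have := Rmult_le_compat_l T _ _ (Rlt_le _ _ HTp) HHc.
  rewrite -Rmult_assoc Rinv_r; [lra| apply: Rgt_not_eq; exact: HTp].
have Hln : ln H <= ln (T * H').
  case: (Rle_lt_or_eq_dec _ _ Hle) => Hc.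
    apply: Rlt_le; apply: ln_increasing => //.
  by rewrite Hc; apply: Rle_refl.
rewrite ln_mult // in Hln; lra.
Qed.
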